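(* Let $(H,\partial)$ be a left Cartan–Eilenberg system, with left couple $(A',E^1,\alpha,\beta,\gamma)$. Then there is a natural isomorphism $$W'\xrightarrow{\ \cong\ }\ker(\kappa)$$ of internal degree $0$, where $W'=\operatorname{colim}_s\operatorname{Rlim}_rK_\infty\operatorname{im}^rA'_s$ is Boardman's whole-plane obstruction group of the left couple and $\kappa\colon\operatorname{colim}_j\lim_iH(i,j)\to\lim_i\operatorname{colim}_jH(i,j)$ is the interchange morphism of the underlying Cartan–Eilenberg system. (No convergence hypothesis is assumed.)
   Context: Let $R$ be a ring and $\mathcal{A}$ the abelian category of $\mathbb{Z}$-graded $R$-modules (grading = internal degree). For a linearly ordered set $\mathcal{I}$, an $\mathcal{I}$-system $(H,\partial)$ consists of objects $H(i,j)\in\mathcal{A}$ for $i\le j$ in $\mathcal{I}$, functorial morphisms $\eta\colon H(i,j)\to H(i',j')$ of internal degree $0$ for $i\le i'$, $j\le j'$, and natural morphisms $\partial\colon H(j,k)\to H(i,j)$ of internal degree $-1$ for $i\le j\le k$ (commuting with the $\eta$'s), such that $H(i,j)\xrightarrow{\eta}H(i,k)\xrightarrow{\eta}H(j,k)\xrightarrow{\partial}H(i,j)$ is exact at each vertex for all $i\le j\le k$. A Cartan–Eilenberg system is a $\mathbb{Z}$-system; a left Cartan–Eilenberg system is a $(\mathbb{Z}\cup\{-\infty\})$-system, $-\infty$ being the least element; its underlying Cartan–Eilenberg system is its restriction to $\mathbb{Z}$. The left couple of a left Cartan–Eilenberg system: $A'_s=H(-\infty,s)$, $E^1_s=H(s-1,s)$,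 $\alpha_s=\eta\colon H(-\infty,s-1)\to H(-\infty,s)$, $\beta_s=\eta\colon H(-\infty,s)\to H(s-1,s)$, $\gamma_s=\partial\colon H(s-1,s)\to H(-\infty,s-1)$. For a sequence $\cdots\to A_{s-1}\xrightarrow{\alpha}A_s\to\cdots$: $A_\infty=\operatorname{colim}_sA_s$ with structure maps $\iota_s$; $\operatorname{im}^rA_s=\operatorname{im}(\alpha^r\colon A_{s-r}\to A_s)$; $K_\infty\operatorname{im}^rA_s=\ker(\iota_s)\cap\operatorname{im}^rA_s$; $W=\operatorname{colim}_s\operatorname{Rlim}_rK_\infty\operatorname{im}^rA_s$, where $\operatorname{Rlim}=\lim^1$. Limits over $i$ are along $\eta\colon H(i-1,j)\to H(i,j)$ as $i\to-\infty$, colimits over $j$ along $\eta\colon H(i,j)\to H(i,j+1)$. The interchange morphism $\kappa$ is the canonical morphism whose restriction to $\lim_iH(i,j)$ followed by projection to $\operatorname{colim}_jH(i,j)$ is $\lim_iH(i,j)\to H(i,j)\to\operatorname{colim}_jH(i,j)$. *)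

(* Defs.v *)
(* Graded R-modules are modelled degreewise: an object of A is
   a family (M n)_{n : int} of left R-modules; a morphism of internal degree d
   is a family of R-linear maps M n -> N (n + d).  Limits, colimits and Rlim
   (= lim^1) of graded modules are computed degreewise, so everything below is
   stated for a fixed internal degree n.  Sequential colimits, limits and lim^1
   are represented concretely by representatives and their equivalence
   relations (the standard constructions in module categories). *)
From HB Require Import structures.
From mathcomp Require Import all_boot all_order all_algebra.
Set Implicit Arguments. Unset Strict Implicit. Unset Printing Implicit Defensive.
Import Order.TTheory GRing.Theory Num.Theory.
Local Open Scope ring_scope.

Inductive ext := NegInf | Fin of int.

Definition ele (x y : ext) : bool :=
  match x, y with
  | NegInf, _ => true
  | Fin _, NegInf => false
  | Fin a, Fin b => (a <= b)%R
  end.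

Section Systems.
Variable R : pzRingType.

(* H i j is only meaningful for ele i j; eta i j i' j' is the structure map
   H(i,j) -> H(i',j') (internal degree 0), del i j k : H(j,k) -> H(i,j) has
   internal degree -1. *)
Record LCE := {
  H : ext -> ext -> int -> lmodType R;
  eta : forall (i j i' j' : ext) (n : int), {linear H i j n -> H i' j' n};
  del : forall (i j k : ext) (n : int), {linear H j k n -> H i j (n - 1)};
  eta_id : forall i j n (x : H i j n), ele i j -> eta i j i j n x = x;
  eta_comp : forall i j i' j' i'' j'' n (x : H i j n),
    ele i j -> ele i' j' -> ele i'' j'' -> ele i i' -> ele j j' ->
    ele i' i'' -> ele j' j'' ->
    eta i' j' i'' j'' n (eta i j i' j' n x) = eta i j i'' j'' n x;
  del_nat : forall i j k i' j' k' n (x : H j k n),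
    ele i j -> ele j k -> ele i' j' -> ele j' k' ->
    ele i i' -> ele j j' -> ele k k' ->
    eta i j i' j' (n - 1) (del i j k n x) = del i' j' k' n (eta j k j' k' n x);
  (* exactness of H(i,j) -> H(i,k) -> H(j,k) -> H(i,j) at each vertex *)
  exact_ik : forall i j k n (y : H i k n), ele i j -> ele j k ->
    (eta i k j k n y = 0 <-> exists x : H i j n, eta i j i k n x = y);
  exact_jk : forall i j k n (y : H j k n), ele i j -> ele j k ->
    (del i j k n y = 0 <-> exists x : H i k n, eta i k j k n x = y);
  exact_ij : forall i j k n (y : H i j (n - 1)), ele i j -> ele j k ->
    (eta i j i k (n - 1) y = 0 <-> exists x : H j k n, del i j k n x = y)
}.

Record LCEMor (X Y : LCE) := {
  mor : forall i j n, {linear H X i j n -> H Y i j n};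
  mor_eta : forall i j i' j' n (x : H X i j n),
    ele i j -> ele i' j' -> ele i i' -> ele j j' ->
    mor i' j' n (eta X i j i' j' n x) = eta Y i j i' j' n (mor i j n x);
  mor_del : forall i j k n (x : H X j k n), ele i j -> ele j k ->
    mor i j (n - 1) (del X i j k n x) = del Y i j k n (mor j k n x)
}.

Unset Implicit Arguments.

Variable X : LCE.
Variable n : int.

Definition Aseq (s : int) := H X NegInf (Fin s) n.
(* the composite of alphas A'_s -> A'_t (t >= s), i.e. alpha^(t-s) = eta *)
Definition Atr (s t : int) : Aseq s -> Aseq t :=
  eta X NegInf (Fin s) NegInf (Fin t) n.

Definition imr (r : nat) (s : int) (x : Aseq s) : Prop :=
  exists y : Aseq (s - r%:Z), Atr (s - r%:Z) s y = x.

(* A'_oo = colim_s A'_s; elements are represented by pairs (s, x). *)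
Definition Ainf_eq (u v : {s : int & Aseq s}) : Prop :=
  exists t, projT1 u <= t /\ projT1 v <= t /\
    Atr (projT1 u) t (projT2 u) = Atr (projT1 v) t (projT2 v).
Definition ker_iota (s : int) (x : Aseq s) : Prop :=
  Ainf_eq (existT Aseq s x) (existT Aseq s 0).
Definition Kim (r : nat) (s : int) (x : Aseq s) : Prop := ker_iota s x /\ imr r s x.

(* Rlim_r of the tower (K_oo im^r A'_s)_r (maps = inclusions) is the cokernel of
   prod_r B_r -> prod_r B_r, (c_r) |-> (c_r - c_{r+1}).
   A representative of an element of W' is (s, b) with b r in K_oo im^r A'_s. *)
Definition WRep := {s : int & nat -> Aseq s}.
Definition Wvalid (w : WRep) : Prop := forall r, Kim r (projT1 w) (projT2 w r).
Definition rlim_eq (t : int) (b b' : nat -> Aseq t) : Prop :=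
  exists c : nat -> Aseq t, (forall r, Kim r t (c r)) /\
    (forall r, b r - b' r = c r - c r.+1).
Definition Weq (w w' : WRep) : Prop :=
  exists t, projT1 w <= t /\ projT1 w' <= t /\
    rlim_eq t (fun r => Atr (projT1 w) t (projT2 w r))
              (fun r => Atr (projT1 w') t (projT2 w' r)).
Definition Wadd (w w' : WRep) : WRep :=
  let m := Num.max (projT1 w) (projT1 w') in
  existT (fun s => nat -> Aseq s) m
    (fun r => Atr (projT1 w) m (projT2 w r) + Atr (projT1 w') m (projT2 w' r)).
Definition Wscale (a : R) (w : WRep) : WRep :=
  existT (fun s => nat -> Aseq s) (projT1 w) (fun r => a *: projT2 w r).

Definition LimRep (j : int) := forall i : int, H X (Fin i) (Fin j) n.
Definition lim_valid (j : int) (x : LimRep j) : Prop :=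
  forall i, i <= j ->
    eta X (Fin (i - 1)) (Fin j) (Fin i) (Fin j) n (x (i - 1)) = x i.
Definition lim_tr (j t : int) (x : LimRep j) : LimRep t :=
  fun i => eta X (Fin (Num.min i j)) (Fin j) (Fin i) (Fin t) n (x (Num.min i j)).

Definition CRep := {j : int & LimRep j}.
Definition Cvalid (c : CRep) : Prop := lim_valid (projT1 c) (projT2 c).
Definition Ceq (c c' : CRep) : Prop :=
  exists t, projT1 c <= t /\ projT1 c' <= t /\
    forall i, i <= t ->
      lim_tr (projT1 c) t (projT2 c) i = lim_tr (projT1 c') t (projT2 c') i.
Definition Cadd (c c' : CRep) : CRep :=
  let m := Num.max (projT1 c) (projT1 c') in
  existT LimRep m
    (fun i => lim_tr (projT1 c) m (projT2 c) i + lim_tr (projT1 c') m (projT2 c') i).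
Definition Cscale (a : R) (c : CRep) : CRep :=
  existT LimRep (projT1 c) (fun i => a *: projT2 c i).

Definition CoRep (i : int) := {j : int & H X (Fin i) (Fin j) n}.
Definition co_valid (i : int) (y : CoRep i) : Prop := i <= projT1 y.
Definition co_eq (i : int) (y y' : CoRep i) : Prop :=
  exists t, projT1 y <= t /\ projT1 y' <= t /\
    eta X (Fin i) (Fin (projT1 y)) (Fin i) (Fin t) n (projT2 y)
    = eta X (Fin i) (Fin (projT1 y')) (Fin i) (Fin t) n (projT2 y').
Definition co_shift (i : int) (y : CoRep (i - 1)) : CoRep i :=
  let m := Num.max i (projT1 y) in
  existT (fun j => H X (Fin i) (Fin j) n) m
    (eta X (Fin (i - 1)) (Fin (projT1 y)) (Fin i) (Fin m) n (projT2 y)).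
Definition LCRep := forall i : int, CoRep i.
Definition LCvalid (z : LCRep) : Prop :=
  forall i, co_valid i (z i) /\ co_eq i (co_shift i (z (i - 1))) (z i).
Definition LCeq (z z' : LCRep) : Prop := forall i, co_eq i (z i) (z' i).
Definition LCzero : LCRep := fun i => existT (fun j => H X (Fin i) (Fin j) n) i 0.

(* Its i-component on lim_i H(i,j) is lim_i H(i,j) -> H(i,j) -> colim_j H(i,j)
   (i <= j); for general i one first passes to level max i j. *)
Definition kappa (c : CRep) : LCRep :=
  fun i => let m := Num.max i (projT1 c) in
    existT (fun j => H X (Fin i) (Fin j) n) m (lim_tr (projT1 c) m (projT2 c) i).

Definition in_ker_kappa (c : CRep) : Prop := Cvalid c /\ LCeq (kappa c) LCzero.

Definition iso_W_kerkappa (F : WRep -> CRep) : Prop :=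
  (forall w, Wvalid w -> in_ker_kappa (F w)) /\
  (forall w w', Wvalid w -> Wvalid w' -> Weq w w' -> Ceq (F w) (F w')) /\
  (forall w w', Wvalid w -> Wvalid w' -> Ceq (F (Wadd w w')) (Cadd (F w) (F w'))) /\
  (forall a w, Wvalid w -> Ceq (F (Wscale a w)) (Cscale a (F w))) /\
  (forall w w', Wvalid w -> Wvalid w' -> Ceq (F w) (F w') -> Weq w w') /\
  (forall c, in_ker_kappa c -> exists2 w, Wvalid w & Ceq (F w) c).

End Systems.

Arguments Atr {R X n}. Arguments imr {R X n}. Arguments Ainf_eq {R X n}.
Arguments ker_iota {R X n}. Arguments Kim {R X n}. Arguments WRep {R}.
Arguments Wvalid {R X n}. Arguments rlim_eq {R X n}. Arguments Weq {R X n}.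
Arguments Wadd {R X n}. Arguments Wscale {R X n}. Arguments LimRep {R}.
Arguments lim_valid {R X n}. Arguments lim_tr {R X n}. Arguments CRep {R}.
Arguments Cvalid {R X n}. Arguments Ceq {R X n}. Arguments Cadd {R X n}.
Arguments Cscale {R X n}. Arguments CoRep {R}. Arguments co_valid {R X n}.
Arguments co_eq {R X n}. Arguments co_shift {R X n}. Arguments LCRep {R}.
Arguments LCvalid {R X n}. Arguments LCeq {R X n}. Arguments LCzero {R X n}.
Arguments kappa {R X n}. Arguments in_ker_kappa {R X n}.
Arguments iso_W_kerkappa {R X n}. Arguments Aseq {R}.

Definition Wmap {R : pzRingType} {X Y : LCE R} (f : LCEMor X Y) {n : int}
  (w : WRep X n) : WRep Y n :=
  existT (fun s => nat -> Aseq Y n s) (projT1 w)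
    (fun r => mor f NegInf (Fin (projT1 w)) n (projT2 w r)).
Definition Cmap {R : pzRingType} {X Y : LCE R} (f : LCEMor X Y) {n : int}
  (c : CRep X n) : CRep Y n :=
  existT (LimRep Y n) (projT1 c)
    (fun i => mor f (Fin i) (Fin (projT1 c)) n (projT2 c i)).

(* Main.v *)
From Pilot Require Import Defs.
From Stdlib Require Import IndefiniteDescription.
From HB Require Import structures.
From mathcomp Require Import all_boot all_order all_algebra zify.
Set Implicit Arguments. Unset Strict Implicit. Unset Printing Implicit Defensive.
Import Order.TTheory GRing.Theory Num.Theory.
Local Open Scope ring_scope.
Import Pilot.Defs.

Section Aux.
Variables (R : pzRingType) (X : LCE R) (n : int).

Lemma HZ a (x : H X (Fin a) (Fin a) n) : x = 0.
Proof.
have := @exact_ik _ X (Fin a) (Fin a) (Fin a) n x.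
have ea : ele (Fin a) (Fin a) by rewrite /= lexx.
move=> /(_ ea ea); rewrite eta_id // => h.
by apply/h; exists x; rewrite eta_id.
Qed.

Lemma EV (p : ext) (k i j : int) (y : H X p (Fin k) n) :
  ele p (Fin k) -> k <= i -> i <= j ->
  eta X p (Fin k) (Fin i) (Fin j) n y = 0.
Proof.
move=> hp hki hij.
rewrite -(@eta_comp _ X p (Fin k) (Fin k) (Fin k)) //=; last by lia.
by rewrite (HZ (eta X p (Fin k) (Fin k) (Fin k) n y)) raddf0.
Qed.

Lemma Atr_comp s t u (x : Aseq X n s) : s <= t -> t <= u ->
  Atr t u (Atr s t x) = Atr s u x.
Proof. by move=> h1 h2; rewrite /Atr eta_comp //=; lia. Qed.

Lemma E_Atr s t i (x : Aseq X n s) : s <= t -> i <= t ->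
  eta X NegInf (Fin t) (Fin i) (Fin t) n (Atr s t x) =
  eta X NegInf (Fin s) (Fin i) (Fin t) n x.
Proof. by move=> h1 h2; rewrite /Atr eta_comp //=; lia. Qed.

Lemma Atr_id s (x : Aseq X n s) : Atr s s x = x.
Proof. by rewrite /Atr eta_id //=. Qed.

Lemma L1 k u t i (y : Aseq X n u) : imr k u y -> u <= t -> i <= t -> u - k%:Z <= i ->
  eta X NegInf (Fin t) (Fin i) (Fin t) n (Atr u t y) = 0.
Proof.
move=> [z <-] h1 h2 h3.
rewrite Atr_comp; [|lia|lia].
rewrite E_Atr; [|lia|lia].
by apply: EV.
Qed.

Lemma Atr0 s t : Atr s t (0 : Aseq X n s) = 0.
Proof. by rewrite /Atr raddf0. Qed.
Lemma AtrD s t (x y : Aseq X n s) : Atr s t (x + y) = Atr s t x + Atr s t y.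
Proof. by rewrite /Atr raddfD. Qed.
Lemma AtrN s t (x : Aseq X n s) : Atr s t (- x) = - Atr s t x.
Proof. by rewrite /Atr raddfN. Qed.
Lemma AtrB s t (x y : Aseq X n s) : Atr s t (x - y) = Atr s t x - Atr s t y.
Proof. by rewrite /Atr raddfB. Qed.
Lemma AtrZ s t c (x : Aseq X n s) : Atr s t (c *: x) = c *: Atr s t x.
Proof. by rewrite /Atr linearZ. Qed.
Lemma Atr_sum s t (I : Type) (r : seq I) (P : pred I) (F : I -> Aseq X n s) :
  Atr s t (\sum_(i <- r | P i) F i) = \sum_(i <- r | P i) Atr s t (F i).
Proof. by rewrite /Atr linear_sum. Qed.

Lemma kerP s (x : Aseq X n s) : ker_iota s x <-> exists t, s <= t /\ Atr s t x = 0.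
Proof.
rewrite /ker_iota /Ainf_eq /=; split.
  by move=> [t [h1 [_ e]]]; exists t; rewrite e Atr0.
by move=> [t [h1 e]]; exists t; rewrite e Atr0.
Qed.

Lemma ker0 s : ker_iota s (0 : Aseq X n s).
Proof. by apply/kerP; exists s; rewrite lexx Atr0. Qed.

Lemma kerD s (x y : Aseq X n s) : ker_iota s x -> ker_iota s y -> ker_iota s (x + y).
Proof.
move=> /kerP [t1 [h1 e1]] /kerP [t2 [h2 e2]]; apply/kerP.
exists (Num.max t1 t2); split; first lia.
rewrite AtrD -(@Atr_comp s t1) ?e1; [|lia|lia].
rewrite -(@Atr_comp s t2 _ y) ?e2; [|lia|lia].
by rewrite !Atr0 addr0.
Qed.

Lemma kerN s (x : Aseq X n s) : ker_iota s x -> ker_iota s (- x).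
Proof. by move=> /kerP [t [h e]]; apply/kerP; exists t; rewrite AtrN e oppr0. Qed.

Lemma kerZ s a (x : Aseq X n s) : ker_iota s x -> ker_iota s (a *: x).
Proof. by move=> /kerP [t [h e]]; apply/kerP; exists t; rewrite AtrZ e scaler0. Qed.

Lemma kerA s t (x : Aseq X n s) : s <= t -> ker_iota s x -> ker_iota t (Atr s t x).
Proof.
move=> hst /kerP [u [h e]]; apply/kerP; exists (Num.max t u); split; first lia.
rewrite Atr_comp; [|lia|lia].
by rewrite -(@Atr_comp s u); [rewrite e Atr0| lia| lia].
Qed.

Lemma imr0 k s : imr k s (0 : Aseq X n s).
Proof. by exists 0; rewrite Atr0. Qed.

Lemma imrD k s (x y : Aseq X n s) : imr k s x -> imr k s y -> imr k s (x + y).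
Proof. by move=> [a <-] [b <-]; exists (a + b); rewrite AtrD. Qed.

Lemma imrN k s (x : Aseq X n s) : imr k s x -> imr k s (- x).
Proof. by move=> [a <-]; exists (- a); rewrite AtrN. Qed.

Lemma imrZ k s c (x : Aseq X n s) : imr k s x -> imr k s (c *: x).
Proof. by move=> [a <-]; exists (c *: a); rewrite AtrZ. Qed.

Lemma imrA k s t (x : Aseq X n s) : s <= t -> imr k s x -> imr k t (Atr s t x).
Proof.
move=> hst [a <-]; exists (Atr (s - k%:Z) (t - k%:Z) a).
rewrite !Atr_comp //; lia.
Qed.

Lemma KimD k s (x y : Aseq X n s) : Kim k s x -> Kim k s y -> Kim k s (x + y).
Proof. by move=> [h1 h2] [h3 h4]; split; [apply: kerD|apply: imrD]. Qed.
Lemma KimN k s (x : Aseq X n s) : Kim k s x -> Kim k s (- x).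
Proof. by move=> [h1 h2]; split; [apply: kerN|apply: imrN]. Qed.
Lemma KimZ k s c (x : Aseq X n s) : Kim k s x -> Kim k s (c *: x).
Proof. by move=> [h1 h2]; split; [apply: kerZ|apply: imrZ]. Qed.
Lemma KimA k s t (x : Aseq X n s) : s <= t -> Kim k s x -> Kim k t (Atr s t x).
Proof. by move=> h [h1 h2]; split; [apply: kerA|apply: imrA]. Qed.


Definition Phi (w : WRep X n) : CRep X n :=
  existT (LimRep X n) (projT1 w) (fun i => eta X NegInf (Fin (projT1 w)) (Fin i)
     (Fin (projT1 w)) n (\sum_(0 <= k < `|projT1 w - i|%N) projT2 w k)).

Lemma T (s : int) (b : nat -> Aseq X n s) t i : s <= t -> i <= t ->
  (forall k, imr k s (b k)) ->
  lim_tr s t (projT2 (Phi (existT _ s b))) i =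
  \sum_(0 <= k < `|t - i|%N)
     eta X NegInf (Fin t) (Fin i) (Fin t) n (Atr s t (b k)).
Proof.
move=> hst hit hb; rewrite /lim_tr /=.
case: (lerP i s) => his.
  rewrite eta_comp /=; [|lia|lia|lia|lia|lia|lia|lia].
  rewrite linear_sum [RHS](big_cat_nat _ (n:= `|s - i|%N)) /=; [|lia|lia].
  rewrite [X in _ = _ + X]big_nat_cond [X in _ = _ + X]big1 ?addr0; last first.
    move=> k /andP[/andP[h1 h2] _]; apply: (L1 (hb k)); lia.
  apply: eq_bigr => k _; rewrite E_Atr //.
rewrite EV /=; [|lia|lia|lia].
rewrite big_nat_cond big1 // => k _; apply: (L1 (hb k)); lia.
Qed.


Lemma sum_ker s (b : nat -> Aseq X n s) N : (forall k, ker_iota s (b k)) ->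
  ker_iota s (\sum_(0 <= k < N) b k).
Proof.
move=> h; apply: (big_ind (ker_iota s)); [exact: ker0| |by move=> k _; apply: h].
by move=> x y; apply: kerD.
Qed.

Lemma P1 (w : WRep X n) : Wvalid w -> in_ker_kappa (Phi w).
Proof.
case: w => s b hw; have hb k : imr k s (b k) by case: (hw k).
have hk k : ker_iota s (b k) by case: (hw k).
split.
  move=> i /= his; rewrite eta_comp /=; [|done|lia|lia|done|lia|lia|lia].
  have -> : `|(s - (i - 1))%R|%N = (`|(s - i)%R|%N).+1 by lia.
  rewrite big_nat_recr //= raddfD /=.
  rewrite -[b `|(s - i)%R|%N](Atr_id) (L1 (hb _)) ?addr0 //; lia.
move=> i; rewrite /co_eq /kappa /LCzero.
cbv zeta; cbn [projT1 projT2].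
change (projT1 (Phi (existT (fun s => nat -> Aseq X n s) s b))) with s.
have hm : s <= Num.max i s by lia.
have him : i <= Num.max i s by lia.
rewrite (T hm him hb).
rewrite -(linear_sum (eta X NegInf (Fin (Num.max i s)) (Fin i) (Fin (Num.max i s)) n)).
rewrite -Atr_sum.
have /kerP [u [hu e]] := sum_ker `|(Num.max i s - i)%R|%N hk.
exists (Num.max u (Num.max i s)); split; first lia.
split; first lia.
rewrite raddf0 eta_comp /=; [|lia|lia|lia|lia|lia|lia|lia].
rewrite -E_Atr; [|lia|lia].
rewrite Atr_comp; [|lia|lia].
rewrite -(@Atr_comp s u); [|lia|lia].
by rewrite e Atr0 raddf0.
Qed.


Lemma Wv_imr s (b : nat -> Aseq X n s) : Wvalid (existT _ s b) -> forall k, imr k s (b k).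
Proof. by move=> hw k; case: (hw k). Qed.

Lemma P2 (w w' : WRep X n) : Wvalid w -> Wvalid w' -> Weq w w' -> Ceq (Phi w) (Phi w').
Proof.
case: w => s b hw; case: w' => s' b' hw'.
have hb := Wv_imr hw; have hb' := Wv_imr hw'.
move=> [t [hs [hs2 [c [hc e]]]]]; simpl in hs, hs2, e.
have [/kerP [u [hu e0]] _] := hc 0%N.
exists u.
change (projT1 (Phi (existT (fun s => nat -> Aseq X n s) s b))) with s.
change (projT1 (Phi (existT (fun s => nat -> Aseq X n s) s' b'))) with s'.
split; first lia. split; first lia.
move=> i hi.
rewrite (T (s:=s)) ?(T (s:=s')) //; [|lia|lia].
apply/eqP; rewrite -subr_eq0 -sumrB; apply/eqP.
set E := eta X NegInf (Fin u) (Fin i) (Fin u) n.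
pose f k := E (Atr t u (c k)).
have ef k : E (Atr s u (b k)) - E (Atr s' u (b' k)) = - (f k.+1 - f k).
  rewrite opprB /f -!raddfB -(@Atr_comp s t u (b k)); [|lia|lia].
  rewrite -(@Atr_comp s' t u (b' k)); [|lia|lia].
  by rewrite -!AtrB e.
under eq_bigr => k _ do rewrite ef.
rewrite sumrN telescope_sumr // /f e0 raddf0 subr0.
have [_ hcN] := hc `|(u - i)%R|%N.
by rewrite (L1 hcN) ?oppr0 //; lia.
Qed.


Lemma lim_tr_id t (y : LimRep X n t) i : i <= t -> lim_tr t t y i = y i.
Proof. by move=> hi; rewrite /lim_tr (min_l hi) eta_id //=. Qed.

Lemma P3 (w w' : WRep X n) : Wvalid w -> Wvalid w' ->
  Ceq (Phi (Wadd w w')) (Cadd (Phi w) (Phi w')).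
Proof.
case: w => s b hw; case: w' => s' b' hw'.
have hb := Wv_imr hw; have hb' := Wv_imr hw'.
rewrite /Ceq /Wadd /Cadd; cbv zeta.
change (projT1 (Phi (existT (fun s => nat -> Aseq X n s) s b))) with s.
change (projT1 (Phi (existT (fun s => nat -> Aseq X n s) s' b'))) with s'.
cbn [projT1 projT2].
set m := Num.max s s'.
have hsm : s <= m by rewrite /m; lia.
have hsm' : s' <= m by rewrite /m; lia.
exists m; split; first exact: lexx.
split; first exact: lexx.
move=> i hi.
rewrite [RHS]lim_tr_id // (T (s:=m)) // ?(T (s:=s)) ?(T (s:=s')) //; last first.
  by move=> k; apply: imrD; apply: imrA.
rewrite -big_split /=; apply: eq_bigr => k _.
by rewrite Atr_id raddfD.
Qed.

Lemma P4 a (w : WRep X n) : Ceq (Phi (Wscale a w)) (Cscale a (Phi w)).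
Proof.
case: w => s b.
exists s; split; first exact: lexx.
split; first exact: lexx.
move=> i hi.
rewrite !lim_tr_id //=.
by rewrite -linearZ /= scaler_sumr.
Qed.


Lemma P5 (w w' : WRep X n) : Wvalid w -> Wvalid w' ->
  Ceq (Phi w) (Phi w') -> Weq w w'.
Proof.
case: w => s b hw; case: w' => s' b' hw'.
have hb := Wv_imr hw; have hb' := Wv_imr hw'.
move=> [t [hs [hs2 he]]].
change (projT1 (Phi (existT (fun s => nat -> Aseq X n s) s b))) with s in hs, he.
change (projT1 (Phi (existT (fun s => nat -> Aseq X n s) s' b'))) with s' in hs2, he.
exists t; split; first exact: hs. split; first exact: hs2.
cbn [projT1 projT2].
pose B k := Atr s t (b k) - Atr s' t (b' k).
pose D r := \sum_(0 <= k < r) B k.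
exists (fun r => - D r); split; last first.
  by move=> r; rewrite /D big_nat_recr //= opprK addKr.
move=> r; split.
  apply: kerN; apply: sum_ker => k; rewrite /B.
  apply: kerD; last apply: kerN; apply: kerA => //.
    by case: (hw k).
  by case: (hw' k).
apply: imrN.
have hi : t - r%:Z <= t by lia.
have := he _ hi; rewrite (T (s:=s)) ?(T (s:=s')) //.
have -> : `|(t - (t - r%:Z))%R|%N = r by lia.
move/eqP; rewrite -subr_eq0 -sumrB.
under eq_bigr => k _ do rewrite -raddfB.
rewrite -linear_sum => /eqP.
have e1 : ele NegInf (Fin (t - r%:Z)) by [].
have e2 : ele (Fin (t - r%:Z)) (Fin t) by rewrite /= hi.
by move/(@exact_ik _ X _ _ _ _ _ e1 e2) => [x hx]; exists x.
Qed.


Lemma claim j (x : LimRep X n j) i : i <= j ->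
  co_eq i (kappa (existT (LimRep X n) j x) i) (LCzero i) ->
  exists a : Aseq X n j,
    eta X NegInf (Fin j) (Fin i) (Fin j) n a = x i /\ ker_iota j a.
Proof.
move=> hij; rewrite /co_eq /kappa /LCzero; cbv zeta; cbn [projT1 projT2].
rewrite (max_r hij) => -[t [hjt [hit]]].
rewrite lim_tr_id // raddf0 => he.
have eNi : ele NegInf (Fin i) by [].
have eij : ele (Fin i) (Fin j) by rewrite /= hij.
have eit : ele (Fin i) (Fin t) by rewrite /= hit.
have hd : del X NegInf (Fin i) (Fin j) n (x i) = 0.
  have := @del_nat _ X NegInf (Fin i) (Fin j) NegInf (Fin i) (Fin t) n (x i).
  by rewrite eta_id // he raddf0 => -> //=.
have [a0 ha0] := (proj1 (@exact_jk _ X NegInf (Fin i) (Fin j) n (x i) eNi eij) hd).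
have h3 : eta X NegInf (Fin t) (Fin i) (Fin t) n (Atr j t a0) = 0.
  rewrite E_Atr // -(@eta_comp _ X NegInf (Fin j) (Fin i) (Fin j)) //= ?ha0 //.
have [z hz] := (proj1 (@exact_ik _ X NegInf (Fin i) (Fin t) n (Atr j t a0) eNi eit) h3).
exists (a0 - Atr i j z); split.
  rewrite linearB ha0 E_Atr // EV ?subr0 //.
apply/kerP; exists t; split => //.
rewrite AtrB Atr_comp //.
by rewrite /Atr hz subrr.
Qed.


Lemma P6 (c : CRep X n) : in_ker_kappa c -> exists2 w, Wvalid w & Ceq (Phi w) c.
Proof.
case: c => j x [hv hk]; rewrite /Cvalid /lim_valid /= in hv.
have cl (r : nat) : exists a : Aseq X n j,
    eta X NegInf (Fin j) (Fin (j - r%:Z)) (Fin j) n a = x (j - r%:Z) /\ ker_iota j a.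
  by apply: claim; [lia| apply: hk].
pose af r := proj1_sig (constructive_indefinite_description _ (cl r)).
have haf r : eta X NegInf (Fin j) (Fin (j - r%:Z)) (Fin j) n (af r) = x (j - r%:Z)
     /\ ker_iota j (af r) := proj2_sig (constructive_indefinite_description _ (cl r)).
pose a' r := if r is 0 then (0 : Aseq X n j) else af r.
have ha' r : ker_iota j (a' r) by case: r => [|r]; [exact: ker0| case: (haf r.+1)].
pose b k := a' k.+1 - a' k.
exists (existT _ j b).
  move=> k; split; first by apply: kerD; [|apply: kerN].
  have hz : eta X NegInf (Fin j) (Fin (j - k%:Z)) (Fin j) n (b k) = 0.
    case: k => [|k].
      by rewrite subr0; apply: HZ.
    rewrite /b /= linearB (proj1 (haf k.+1)).
    rewrite -(@eta_comp _ X NegInf (Fin j) (Fin (j - (k.+2)%:Z)) (Fin j)) /=;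
      [|done|lia|lia|done|lia|lia|lia].
    have hv' := hv (j - (k.+1)%:Z) ltac:(lia).
    have e : j - (k.+1)%:Z - 1 = j - (k.+2)%:Z by lia.
    rewrite e in hv'.
    have h2 : eta X (Fin (j - (k.+2)%:Z)) (Fin j) (Fin (j - (k.+1)%:Z)) (Fin j) n
       (eta X NegInf (Fin j) (Fin (j - (k.+2)%:Z)) (Fin j) n (af k.+2)) = x (j - (k.+1)%:Z).
      by rewrite (proj1 (haf k.+2)).
    by rewrite h2 subrr.
  have e1 : ele NegInf (Fin (j - k%:Z)) by [].
  have e2 : ele (Fin (j - k%:Z)) (Fin j) by rewrite /=; lia.
  by move: hz => /(@exact_ik _ X _ _ _ _ _ e1 e2) [y hy]; exists y.
exists j.
change (projT1 (Phi (existT (fun s => nat -> Aseq X n s) j b))) with j.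
split; first exact: lexx. split; first exact: lexx.
move=> i hi /=.
rewrite !lim_tr_id //=.
rewrite /b telescope_sumr // subr0.
case eN : `|(j - i)%R|%N => [|r].
  have e : i = j by lia.
  subst i.
  by rewrite [RHS]HZ; apply: HZ.
have e : j - (r.+1)%:Z = i by lia.
have := proj1 (haf r.+1); rewrite e => <-.
by [].
Qed.

End Aux.

Lemma P7 (R : pzRingType) (X Y : LCE R) (f : LCEMor X Y) (n : int) (w : WRep X n) :
  Ceq (Phi (Wmap f w)) (Cmap f (Phi w)).
Proof.
case: w => s b.
exists s; split; first exact: lexx. split; first exact: lexx.
move=> i hi; rewrite !lim_tr_id //=.
rewrite mor_eta //=; congr (_ _); by rewrite [RHS]linear_sum.
Qed.

Theorem theorem7p4 (R : pzRingType) :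
  exists Phi : forall (X : LCE R) (n : int), WRep X n -> CRep X n,
    (forall (X : LCE R) (n : int), iso_W_kerkappa (Phi X n)) /\
    (forall (X Y : LCE R) (f : LCEMor X Y) (n : int) (w : WRep X n),
       Wvalid w -> Ceq (Phi Y n (Wmap f w)) (Cmap f (Phi X n w))).
Proof.
exists (fun X n => @Phi R X n); split; last by move=> X Y f n w _; apply: P7.
move=> X n; split; first exact: P1.
split; first exact: P2.
split; first exact: P3.
split; first by move=> a w _; apply: P4.
split; first exact: P5.
exact: P6.
Qed.
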